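(* Let $\mathcal G$ be a topological $2$-group, $X$ a topological space, $\pi\colon P\to\overline X$ a principal $\mathcal G$-bundle and $\mathcal A=\{(U_i,\psi_i,\phi_i,\varepsilon_i)\}_{i\in I}$ an atlas of $\pi$. Then $c_{\mathcal A}=(\mathbf x,\mathbf e)$, defined below, is a $\mathcal G$-valued Čech cocycle subordinate to $\mathcal U=\{U_i\}_{i\in I}$.
   Context: Topological $2$-group $\mathcal G=(\mathcal G_1\rightrightarrows\mathcal G_0)$ (groupoid internal to topological groups; product $g*h$ for $t(g)=s(h)$, equal to $h1_{t(g)^{-1}}g$), $\mathcal E=\mathrm{Ker}(s)$, ${}^xe=1_xe1_{x^{-1}}$; $\overline X=(X\rightrightarrows X)$. A principal $\mathcal G$-bundle is a continuous functor $\pi\colon P\to\overline X$ from a $\mathcal G$-$2$-space (topological groupoid with strict continuous right $\mathcal G$-action) admitting an atlas: a family of trivializing charts $(U_i,\psi_i,\phi_i,\varepsilon_i)$ with $\{U_i\}$ an open cover, $\psi_i\colon P|_{U_i}\to\overline{U_i}\times\mathcal G$ a $\mathcal G$-equivariant continuous functor with $\mathcal G$-pseudo-inverse $\phi_i\colon\overline{U_i}\times\mathcal G\to P|_{U_i}$, $\varepsilon_i\colon\phi_i\psi_i\Rightarrow\mathrm{id}_{P|_{U_i}}$ a $\mathcal G_0$-equivariant continuous natural isomorphism, with $\mathrm{pr}_1\psi_i=\pi|_{U_i}$ and $\pi|_{U_i}\phi_i=\mathrm{pr}_1$. Write $U_{ij}=U_i\cap U_j$, etc. The transition functor $T_{ij}=\psi_i\phi_j\colon\overline{U_{ij}}\times\mathcal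 G\to\overline{U_{ij}}\times\mathcal G$ satisfies $T_{ij}(u,1)=(u,\mathbf x_{ij}(u))$ for a unique continuous $\mathbf x_{ij}\colon U_{ij}\to\mathcal G_0$. For $(u,x)\in U_{ijk}\times\mathcal G_0$, set $\gamma_{ijk}(u,x)=\psi_i(\varepsilon_j(\phi_k(u,x)))$; then there is a unique continuous $\mathbf e_{ijk}\colon U_{ijk}\to\mathcal G_1$ with $\gamma_{ijk}(u,x)=(u,\mathbf e_{ijk}(u)1_{\mathbf x_{ij}(u)\mathbf x_{jk}(u)x})$. A $\mathcal G$-valued Čech cocycle subordinate to $\mathcal U$ is a pair of families of continuous maps $\mathbf x_{ij}\colon U_{ij}\to\mathcal G_0$, $\mathbf e_{ijk}\colon U_{ijk}\to\mathcal E$ with $t(\mathbf e_{ijk})\mathbf x_{ij}\mathbf x_{jk}=\mathbf x_{ik}$ on $U_{ijk}$ and $\mathbf e_{ikl}\mathbf e_{ijk}=\mathbf e_{ijl}\,{}^{\mathbf x_{ij}}\mathbf e_{jkl}$ on $U_{ijkl}$. *)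

(* Defs.v *)
From HB Require Import structures.
From mathcomp Require Import all_boot all_order all_algebra.
From mathcomp Require Import all_classical topology.
Set Implicit Arguments. Unset Strict Implicit. Unset Printing Implicit Defensive.
Local Open Scope classical_set_scope.

Definition is_top_group (T : topologicalType) (mul : T -> T -> T) (one : T)
    (inv : T -> T) : Prop :=
  [/\ (forall x y z, mul x (mul y z) = mul (mul x y) z),
      (forall x, mul one x = x /\ mul x one = x),
      (forall x, mul (inv x) x = one /\ mul x (inv x) = one),
      continuous (fun q : T * T => mul q.1 q.2) &
      continuous inv].

(* Composition [gcomp f g] is defined when [gt f = gs g] ("f then g"). *)
Record tgpd := Tgpd {
  Ob : topologicalType;
  Mor : topologicalType;
  gs : Mor -> Ob;
  gt : Mor -> Ob;
  gid : Ob -> Mor;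
  gcomp : Mor -> Mor -> Mor;
  ginv : Mor -> Mor }.

Definition composable (C : tgpd) : set (Mor C * Mor C) :=
  [set q | gt q.1 = gs q.2].

Definition is_top_groupoid (C : tgpd) : Prop :=
  [/\ (forall p : Ob C, gs (gid p) = p /\ gt (gid p) = p),
      (forall f g : Mor C, gt f = gs g -> gs (gcomp f g) = gs f /\ gt (gcomp f g) = gt g),
      (forall f g h : Mor C, gt f = gs g -> gt g = gs h ->
         gcomp f (gcomp g h) = gcomp (gcomp f g) h),
      (forall f : Mor C, gcomp (gid (gs f)) f = f /\ gcomp f (gid (gt f)) = f) /\
      (forall f : Mor C, gs (ginv f) = gt f /\ gt (ginv f) = gs f /\
                 gcomp f (ginv f) = gid (gs f) /\ gcomp (ginv f) f = gid (gt f)) &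
      [/\ continuous (@gs C), continuous (@gt C), continuous (@gid C),
          continuous (@ginv C) &
          {within @composable C, continuous (fun q : Mor C * Mor C => gcomp q.1 q.2)}]].

Record top2group := Top2group {
  tg_gpd : tgpd;
  mul0 : Ob tg_gpd -> Ob tg_gpd -> Ob tg_gpd;
  one0 : Ob tg_gpd;
  inv0 : Ob tg_gpd -> Ob tg_gpd;
  mul1 : Mor tg_gpd -> Mor tg_gpd -> Mor tg_gpd;
  one1 : Mor tg_gpd;
  inv1 : Mor tg_gpd -> Mor tg_gpd;
  tg_groupoid : is_top_groupoid tg_gpd;
  tg_group0 : is_top_group mul0 one0 inv0;
  tg_group1 : is_top_group mul1 one1 inv1;
  tg_src_hom : forall f g, gs (mul1 f g) = mul0 (gs f) (gs g);
  tg_tgt_hom : forall f g, gt (mul1 f g) = mul0 (gt f) (gt g);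
  tg_id_hom : forall x y : Ob tg_gpd, gid (mul0 x y) = mul1 (gid x) (gid y);
  tg_inv_hom : forall f g, ginv (mul1 f g) = mul1 (ginv f) (ginv g);
  tg_comp_hom : forall f f' g g', gt f = gs g -> gt f' = gs g' ->
     gcomp (mul1 f f') (mul1 g g') = mul1 (gcomp f g) (gcomp f' g') }.

Definition G0 (G : top2group) : topologicalType := Ob (tg_gpd G).
Definition G1 (G : top2group) : topologicalType := Mor (tg_gpd G).
Definition src (G : top2group) : G1 G -> G0 G := @gs (tg_gpd G).
Definition tgt (G : top2group) : G1 G -> G0 G := @gt (tg_gpd G).
Definition idm (G : top2group) : G0 G -> G1 G := @gid (tg_gpd G).
Definition conj2 (G : top2group) (x : G0 G) (e : G1 G) : G1 G :=
  mul1 (mul1 (idm x) e) (idm (inv0 x)).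
Definition kerE (G : top2group) : set (G1 G) := [set e | src e = one0 G].

Record G2sp (G : top2group) := G2Sp {
  sp_gpd :> tgpd;
  act0 : Ob sp_gpd -> G0 G -> Ob sp_gpd;
  act1 : Mor sp_gpd -> G1 G -> Mor sp_gpd }.

Definition is_G2space (G : top2group) (P : G2sp G) : Prop :=
  [/\ is_top_groupoid P,
      continuous (fun q : Ob P * G0 G => act0 q.1 q.2),
      continuous (fun q : Mor P * G1 G => act1 q.1 q.2),
      [/\ (forall (f : Mor P) (g : G1 G), gs (act1 f g) = act0 (gs f) (src g) /\
                       gt (act1 f g) = act0 (gt f) (tgt g)),
          (forall (p : Ob P) (x : G0 G), act1 (@gid P p) (idm x) = @gid P (act0 p x)) &
          (forall (f f' : Mor P) (g g' : G1 G), gt f = gs f' -> tgt g = src g' ->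
             act1 (gcomp f f') (gcomp g g') = gcomp (act1 f g) (act1 f' g'))] &
      [/\ (forall p : Ob P, act0 p (one0 G) = p),
          (forall (p : Ob P) (x y : G0 G), act0 (act0 p x) y = act0 p (mul0 x y)),
          (forall f : Mor P, act1 f (one1 G) = f) &
          (forall (f : Mor P) (g h : G1 G), act1 (act1 f g) h = act1 f (mul1 g h))]].

(* The trivial G-2-space  \bar X x G  (objects X x G_0, morphisms X x G_1,  *)
(* only identities in the X direction, G acting by right multiplication).  *)
Definition triv_gpd (G : top2group) (X : topologicalType) : tgpd :=
  @Tgpd (X * G0 G)%type (X * G1 G)%type
    (fun m => (m.1, src m.2)) (fun m => (m.1, tgt m.2))
    (fun q => (q.1, idm q.2))
    (fun m m' => (m.1, gcomp m.2 m'.2))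
    (fun m => (m.1, ginv m.2)).

Definition triv_sp (G : top2group) (X : topologicalType) : G2sp G :=
  @G2Sp G (triv_gpd G X)
    (fun q y => (q.1, mul0 q.2 y)) (fun m g => (m.1, mul1 m.2 g)).

Definition full_mor (C : tgpd) (D : set (Ob C)) : set (Mor C) :=
  [set f | D (gs f) /\ D (gt f)].

Definition cont_functor_on (A B : tgpd) (D : set (Ob A))
    (F0 : Ob A -> Ob B) (F1 : Mor A -> Mor B) : Prop :=
  [/\ (forall f, full_mor D f -> gs (F1 f) = F0 (gs f) /\ gt (F1 f) = F0 (gt f)),
      (forall p, D p -> F1 (@gid A p) = @gid B (F0 p)),
      (forall f g, full_mor D f -> full_mor D g -> gt f = gs g ->
         F1 (gcomp f g) = gcomp (F1 f) (F1 g)),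
      {within D, continuous F0} &
      {within full_mor D, continuous F1}].

Definition equivariant_on (G : top2group) (A B : G2sp G) (D : set (Ob A))
    (F0 : Ob A -> Ob B) (F1 : Mor A -> Mor B) : Prop :=
  (forall p x, D p -> F0 (act0 p x) = act0 (F0 p) x) /\
  (forall f g, full_mor D f -> F1 (act1 f g) = act1 (F1 f) g).

(* groupoid every natural transformation is a natural isomorphism.       *)
Definition cont_equiv_nat_trans_on (G : top2group) (A B : G2sp G)
    (D : set (Ob A)) (F0 : Ob A -> Ob B) (F1 : Mor A -> Mor B)
    (F0' : Ob A -> Ob B) (F1' : Mor A -> Mor B) (eta : Ob A -> Mor B) : Prop :=
  [/\ (forall p, D p -> gs (eta p) = F0 p /\ gt (eta p) = F0' p),
      (forall f, full_mor D f -> gcomp (F1 f) (eta (gt f)) = gcomp (eta (gs f)) (F1' f)),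
      {within D, continuous eta} &
      (forall p x, D p -> eta (act0 p x) = act1 (eta p) (idm x))].

(* pi = (pi0, pi1) is a continuous functor P -> \bar X, G-invariant     *)
(* (\bar X carrying the trivial action).                               *)
Definition is_bundle_functor (G : top2group) (P : G2sp G) (X : topologicalType)
    (pi0 : Ob P -> X) (pi1 : Mor P -> X) : Prop :=
  [/\ (forall f, pi1 f = pi0 (gs f) /\ pi1 f = pi0 (gt f)),
      continuous pi0, continuous pi1 &
      (forall p x, pi0 (act0 p x) = pi0 p) /\
      (forall f g, pi1 (act1 f g) = pi1 f)].

(* p with pi0 p in V; objects of \bar V x G are the q with q.1 in V.     *)
Definition is_chart (G : top2group) (P : G2sp G) (X : topologicalType)
    (pi0 : Ob P -> X) (pi1 : Mor P -> X) (V : set X)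
    (psi0 : Ob P -> X * G0 G) (psi1 : Mor P -> X * G1 G)
    (phi0 : X * G0 G -> Ob P) (phi1 : X * G1 G -> Mor P)
    (eps : Ob P -> Mor P) : Prop :=
  let D := [set p | V (pi0 p)] in
  let DT := [set q : X * G0 G | V q.1] in
  [/\
      @cont_functor_on (sp_gpd P) (triv_gpd G X) D psi0 psi1 /\
      @equivariant_on G P (triv_sp G X) D psi0 psi1,
      (forall p, D p -> (psi0 p).1 = pi0 p) /\
      (forall f, full_mor D f -> (psi1 f).1 = pi1 f),
      @cont_functor_on (triv_gpd G X) (sp_gpd P) DT phi0 phi1 /\
      @equivariant_on G (triv_sp G X) P DT phi0 phi1,
      (forall q, DT q -> pi0 (phi0 q) = q.1) /\
      (forall m, @full_mor (triv_gpd G X) DT m -> pi1 (phi1 m) = m.1) &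
      [/\
          @cont_equiv_nat_trans_on G P P D
            (fun p => phi0 (psi0 p)) (fun f => phi1 (psi1 f))
            id id eps &
          (* phi is a G-pseudo-inverse of psi: also psi phi ~= id *)
          exists eta : X * G0 G -> X * G1 G,
            @cont_equiv_nat_trans_on G (triv_sp G X) (triv_sp G X) DT
              (fun q => psi0 (phi0 q)) (fun m => psi1 (phi1 m))
              id id eta]].

Definition is_atlas (G : top2group) (P : G2sp G) (X : topologicalType)
    (pi0 : Ob P -> X) (pi1 : Mor P -> X) (I : Type) (U : I -> set X)
    (psi0 : I -> Ob P -> X * G0 G) (psi1 : I -> Mor P -> X * G1 G)
    (phi0 : I -> X * G0 G -> Ob P) (phi1 : I -> X * G1 G -> Mor P)
    (eps : I -> Ob P -> Mor P) : Prop :=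
  [/\ (forall i, open (U i)),
      (forall u : X, exists i, U i u) &
      (forall i, is_chart pi0 pi1 (U i) (psi0 i) (psi1 i) (phi0 i) (phi1 i) (eps i))].

(* G-valued Cech cocycles subordinate to U (maps defined on all of X,   *)
(* only their restrictions to U_ij resp. U_ijk matter).                 *)
Definition cech_cocycle (G : top2group) (X : topologicalType) (I : Type)
    (U : I -> set X) (x : I -> I -> X -> G0 G) (e : I -> I -> I -> X -> G1 G) : Prop :=
  [/\ (forall i j, {within U i `&` U j, continuous x i j}),
      (forall i j k, {within U i `&` U j `&` U k, continuous e i j k}),
      (forall i j k u, (U i `&` U j `&` U k) u -> kerE (e i j k u)),
      (forall i j k u, (U i `&` U j `&` U k) u ->
         mul0 (mul0 (tgt (e i j k u)) (x i j u)) (x j k u) = x i k u) &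
      (forall i j k l u, (U i `&` U j `&` U k `&` U l) u ->
         mul1 (e i k l u) (e i j k u) = mul1 (e i j l u) (conj2 (x i j u) (e j k l u)))].

(* Main.v *)
Require Import Defs.
From mathcomp Require Import all_boot all_classical topology.
Local Open Scope classical_set_scope.

Lemma grp_facts (T : topologicalType) (mul : T -> T -> T) one inv :
  is_top_group mul one inv ->
  [/\ (forall a b c, mul (mul a b) c = mul a (mul b c)),
      (forall a, mul one a = a), (forall a, mul a one = a),
      (forall a b, mul (mul a b) (inv b) = a) &
      (forall a b c, mul a c = mul b c -> a = b)].
Proof.
case=> A U V _ _.
have mK : forall a b, mul (mul a b) (inv b) = a.
  by move=> a b; rewrite -A (proj2 (V b)) (proj2 (U a)).
split.
- by move=> a b c; rewrite A.
- by move=> a; case: (U a).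
- by move=> a; case: (U a).
- exact: mK.
- by move=> a b c h; rewrite -(mK a c) h mK.
Qed.

Arguments grp_facts {T mul one inv}.

Lemma grp_inv (T : topologicalType) (mul : T -> T -> T) one inv :
  is_top_group mul one inv -> forall a, mul (inv a) a = one /\ mul a (inv a) = one.
Proof. by case. Qed.
Arguments grp_inv {T mul one inv}.

Lemma wcomp (S T W : topologicalType) (A : set S) (B : set T) (f : S -> T) (g : T -> W) :
  (forall a, A a -> B (f a)) -> {within A, continuous f} -> {within B, continuous g} ->
  {within A, continuous (g \o f)}.
Proof.
move=> AB cf cg; apply/subspace_continuousP => a Aa.
have hf := (subspace_continuousP A f).1 cf a Aa.
have hg := (subspace_continuousP B g).1 cg (f a) (AB a Aa).
apply: cvg_comp hg => P /= hP.
have := hf _ hP; rewrite /= !nbhs_simpl /within /=.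
apply: filterS => x H Ax; exact: H Ax (AB x Ax).
Qed.

Lemma wpair (S T W : topologicalType) (A : set S) (f : S -> T) (g : S -> W) :
  {within A, continuous f} -> {within A, continuous g} ->
  {within A, continuous (fun x => (f x, g x))}.
Proof.
move=> cf cg; apply/subspace_continuousP => a Aa.
apply: cvg_pair.
- exact: (subspace_continuousP A f).1 cf a Aa.
- exact: (subspace_continuousP A g).1 cg a Aa.
Qed.

Lemma wglob (S T W : topologicalType) (A : set S) (f : S -> T) (g : T -> W) :
  continuous g -> {within A, continuous f} -> {within A, continuous (g \o f)}.
Proof. by move=> cg cf; apply: within_continuous_comp => // ? _; apply: cg. Qed.

Arguments wglob {S T W A f g}.
Arguments wpair {S T W A f g}.

Lemma idm_one (G : top2group) : @gid (tg_gpd G) (one0 G) = one1 G.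
Proof.
have [A U R mK C] := grp_facts (tg_group1 G).
have [A0 U0 R0 mK0 C0] := grp_facts (tg_group0 G).
apply: (C _ _ (@gid (tg_gpd G) (one0 G))).
by rewrite -tg_id_hom U0 U.
Qed.

Lemma gid_st (G : top2group) (y : Ob (tg_gpd G)) :
  gs (@gid (tg_gpd G) y) = y /\ gt (@gid (tg_gpd G) y) = y.
Proof. by case: (tg_groupoid G) => h *; apply: h. Qed.

Lemma gcompE (G : top2group) (g h : Mor (tg_gpd G)) : gt g = gs h ->
  gcomp g h = mul1 (mul1 h (gid (inv0 (gs h)))) g.
Proof.
move=> gh.
have [A U R mK C] := grp_facts (tg_group1 G).
have [A0 U0 R0 mK0 C0] := grp_facts (tg_group0 G).
have [_ _ _ [idl _] _] := tg_groupoid G.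
set k := mul1 h (gid (inv0 (gs h))).
have sk : gs k = one0 G by rewrite tg_src_hom (proj1 (gid_st _ _)) (proj2 (grp_inv (tg_group0 G) _)).
have e1 : g = mul1 (one1 G) g by rewrite U.
have e2 : h = mul1 k (gid (gs h)).
  by rewrite /k A -tg_id_hom (proj1 (grp_inv (tg_group0 G) _)) idm_one R.
rewrite {1}e1 {1}e2 tg_comp_hom; last by rewrite gh (proj1 (gid_st _ _)).
  rewrite -gh (proj2 (idl g)) -idm_one -sk (proj1 (idl k)) //.
by rewrite -idm_one (proj2 (gid_st _ _)).
Qed.

Theorem lemma9 (G : top2group) (X : topologicalType) (P : G2sp G)
  (pi0 : Ob P -> X) (pi1 : Mor P -> X)
  (I : Type) (U : I -> set X)
  (psi0 : I -> Ob P -> X * G0 G) (psi1 : I -> Mor P -> X * G1 G)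
  (phi0 : I -> X * G0 G -> Ob P) (phi1 : I -> X * G1 G -> Mor P)
  (eps : I -> Ob P -> Mor P)
  (hP : is_G2space P)
  (hpi : is_bundle_functor pi0 pi1)
  (hA : is_atlas pi0 pi1 U psi0 psi1 phi0 phi1 eps)
  (x : I -> I -> X -> G0 G) (e : I -> I -> I -> X -> G1 G)
  (hx : forall i j u, (U i `&` U j) u ->
          psi0 i (phi0 j (u, one0 G)) = (u, x i j u))
  (he : forall i j k u (y : G0 G), (U i `&` U j `&` U k) u ->
          psi1 i (eps j (phi0 k (u, y))) =
          (u, mul1 (e i j k u) (idm (mul0 (mul0 (x i j u) (x j k u)) y)))) :
  cech_cocycle U x e.
Proof.
have [A1 U1 R1 mK1 C1] := grp_facts (tg_group1 G).
have [A0 U0 R0 mK0 C0] := grp_facts (tg_group0 G).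
have [_ _ _ cmul0 cinv0] := tg_group0 G.
have [_ _ _ cmul1 cinv1] := tg_group1 G.
have [_ _ _ _ [_ _ cgid _ _]] := tg_groupoid G.
have [hpi1 _ _ _] := hpi.
have [[Pgid _ _ _ _] _ _ _ _] := hP.
case: hA => _ _ hch.
have full : forall i f, U i (pi1 f) -> full_mor [set p | U i (pi0 p)] f.
  by move=> i f h; split; rewrite /= -?(proj1 (hpi1 f)) -?(proj2 (hpi1 f)).
have K1 : forall k u y, U k u -> phi0 k (u, y) = act0 (phi0 k (u, one0 G)) y.
  move=> k u y Uku.
  have [_ _ [_ [eq0F _]] _ _] := hch k.
  by rewrite -eq0F //= U0.
have K2 : forall k u y, U k u -> pi0 (phi0 k (u, y)) = u.
  by move=> k u y Uku; have [_ _ _ [pf0 _] _] := hch k; rewrite pf0.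
have K3 : forall i j u y, U i u -> U j u ->
    psi0 i (phi0 j (u, y)) = (u, mul0 (x i j u) y).
  move=> i j u y Ui Uj; have [[_ [eq0P _]] _ _ _ _] := hch i.
  rewrite K1 // eq0P /=; last by rewrite /= K2.
  by rewrite hx.
have K4 : forall k p, U k (pi0 p) ->
    [/\ gs (eps k p) = phi0 k (psi0 k p), gt (eps k p) = p & pi1 (eps k p) = pi0 p].
  move=> k p Ukp; have [_ _ _ _ [[stE _ _ _] _]] := hch k.
  have [h1 h2] := stE p Ukp.
  by split => //; rewrite (proj2 (hpi1 _)) h2.
have K5 : forall i f, U i (pi1 f) ->
    @gs (triv_gpd G X) (psi1 i f) = psi0 i (gs f) /\ @gt (triv_gpd G X) (psi1 i f) = psi0 i (gt f).
  move=> i f h; have [[[stP _ _ _ _] _] _ _ _ _] := hch i.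
  exact: stP (full i f h).
have K6 : forall i f g, U i (pi1 f) -> U i (pi1 g) -> gt f = gs g ->
    psi1 i (gcomp f g) = @gcomp (triv_gpd G X) (psi1 i f) (psi1 i g).
  move=> i f g hf hg fg; have [[[_ _ cpP _ _] _] _ _ _ _] := hch i.
  exact: cpP (full i f hf) (full i g hg) fg.
have K7 : forall i j u m, U i u -> U j u ->
    psi1 i (phi1 j (u, m)) = (u, mul1 (@gid (tg_gpd G) (x i j u)) m).
  move=> i j u m Ui Uj.
  have [[[_ idP _ _ _] [_ eq1P]] _ [[_ idF _ _ _] [_ eq1F]] [pf0 _] _] := hch j.
  have [[[_ idPi _ _ _] [_ eq1Pi]] _ _ _ _] := hch i.
  have -> : (u, m) = act1 (g := triv_sp G X) (u, one1 G) m by rewrite /= U1.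
  rewrite eq1F; last by split.
  have -> : (u, one1 G) = @gid (triv_gpd G X) (u, one0 G) by rewrite /= /idm idm_one.
  rewrite idF //.
  have Dp : U i (pi0 (phi0 j (u, one0 G))) by rewrite K2.
  rewrite eq1Pi; last by split; rewrite /= ?(proj1 (Pgid _)) ?(proj2 (Pgid _)).
  by rewrite idPi //= hx.
  have Kst : forall i j k u, (U i `&` U j `&` U k) u ->
    gs (e i j k u) = one0 G /\
    mul0 (mul0 (gt (e i j k u)) (x i j u)) (x j k u) = x i k u.
  move=> i j k u hu; have [[Ui Uj] Uk] := hu.
  have Ujp : U j (pi0 (phi0 k (u, one0 G))) by rewrite K2.
  have [g1 g2 g3] := K4 j _ Ujp.
  have hi : U i (pi1 (eps j (phi0 k (u, one0 G)))) by rewrite g3 K2.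
  have [s1 s2] := K5 i _ hi.
  rewrite he // in s1 s2.
  rewrite g1 K3 // K3 // in s1; rewrite g2 hx // in s2.
  case: s1 => s1; case: s2 => s2.
  rewrite /src /tgt /idm in s1 s2.
  rewrite tg_src_hom (proj1 (gid_st _ _)) !R0 in s1.
  rewrite tg_tgt_hom (proj2 (gid_st _ _)) !R0 in s2.
  split; last by rewrite A0.
  by apply: (C0 _ _ (mul0 (x i j u) (x j k u))); rewrite U0.
have gsid : forall y : Ob (tg_gpd G), gs (gid y) = y by move=> y; case: (gid_st G y).
have gtid : forall y : Ob (tg_gpd G), gt (gid y) = y by move=> y; case: (gid_st G y).
have H1 : forall (a : Mor (tg_gpd G)) z, mul1 (mul1 a (gid z)) (gid (inv0 z)) = a.
  by move=> a z; rewrite A1 -tg_id_hom (proj2 (grp_inv (tg_group0 G) _)) idm_one R1.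
have Kcoc : forall i j k l u, (U i `&` U j `&` U k `&` U l) u ->
    mul1 (e i k l u) (e i j k u) =
    mul1 (e i j l u) (mul1 (mul1 (@gid (tg_gpd G) (x i j u)) (e j k l u)) (gid (inv0 (x i j u)))).
  move=> i j k l u hu; have [[[Ui Uj] Uk] Ul] := hu.
  have [_ _ _ _ [[_ natE _ _] _]] := hch j.
  set q := phi0 l (u, one0 G).
  have Ukq : U k (pi0 q) by rewrite K2.
  have [a1 a2 a3] := K4 k q Ukq.
  have Ujq : U j (pi0 q) by rewrite K2.
  have [b1 b2 b3] := K4 j q Ujq.
  have nat := natE (eps k q) (full j _ (eq_ind_r _ Ujq a3)).
  rewrite /= a2 a1 K3 // in nat.
  have Ujp : U j (pi0 (phi0 k (u, mul0 (x k l u) (one0 G)))) by rewrite K2.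
  have [c1 c2 c3] := K4 j _ Ujp.
  have := congr1 (psi1 i) nat.
  have [_ _ [[stFj _ _ _ _] _] [_ pf1j] _] := hch j.
  have hfm : forall m : X * G1 G, U j m.1 -> @full_mor (triv_gpd G X) [set q | U j q.1] m.
    by move=> m h; split.
  rewrite (he j k l u) //.
  have [_ tE] := Kst j k l u (conj (conj Uj Uk) Ul).
  rewrite K6; first last.
  - rewrite (proj2 (stFj _ (hfm (u, _) Uj))) b1 K3 //= /tgt /idm tg_tgt_hom (proj2 (gid_st _ _)) R0.
    by rewrite -A0 tE R0.
  - by rewrite b3 K2.
  - by rewrite pf1j //; exact: hfm.
  rewrite K6; first last.
  - by rewrite c2 a1 K3.
  - by rewrite a3 K2.
  - by rewrite c3 K2.
  rewrite K7 // he // he // he //= => -[].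
  have [sijl tijl] := Kst i j l u (conj (conj Ui Uj) Ul).
  have [sikl tikl] := Kst i k l u (conj (conj Ui Uk) Ul).
  have [sijk tijk] := Kst i j k u (conj (conj Ui Uj) Uk).
  rewrite /idm !R0.
  rewrite gcompE; last first.
    by rewrite !tg_tgt_hom !tg_src_hom !gsid !gtid sijl U0 -(A0 (gt _)) tE.
  rewrite gcompE; last first.
    by rewrite !tg_tgt_hom !tg_src_hom !gsid !gtid sikl U0 -(A0 (gt _)) -(A0 (gt _)) tijk.
  rewrite !tg_src_hom !gsid sijl sikl !U0 !H1 => Eq.
  apply: (C1 _ _ (gid (mul0 (mul0 (x i j u) (x j k u)) (x k l u)))).
  rewrite [LHS]A1 -Eq !A1 -tg_id_hom (A0 (x i j u)) -A0.
  by rewrite (proj1 (grp_inv (tg_group0 G) _)) U0.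
have csnd : forall (A B : topologicalType), continuous (@snd A B).
  by move=> A B [a b]; exact: cvg_snd.
have cin : forall A : set X, {within A, continuous (fun u : X => (u, one0 G))}.
  by move=> A; apply: continuous_subspaceT => u; apply: cvg_pair; [exact: cvg_id | exact: cvg_cst].
have cx : forall i j, {within U i `&` U j, continuous x i j}.
  move=> i j.
  have [[[_ _ _ c0P _] _] _ [[_ _ _ c0F _] _] _ _] := hch i.
  have [_ _ [[_ _ _ c0Fj _] _] _ _] := hch j.
  have c2 : {within U i `&` U j, continuous (phi0 j \o (fun u => (u, one0 G)))}.
    by refine (@wcomp X _ (Ob P) (U i `&` U j) [set q | U j q.1] _ (phi0 j) _ (cin _) c0Fj) => u [_ Uj].
  have c3 : {within U i `&` U j, continuous (psi0 i \o (phi0 j \o (fun u => (u, one0 G))))}.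
    by refine (@wcomp X _ _ (U i `&` U j) [set p | U i (pi0 p)] _ (psi0 i) _ c2 c0P) => u [Ui Uj] /=; rewrite K2.
  have c4 := wglob (@csnd _ _) c3.
  apply: (subspace_eq_continuous _ c4) => u /set_mem hu /=.
  by rewrite /from_subspace /comp hx.
have ccst : forall (A : set X) (T : topologicalType) (c : T), {within A, continuous (fun _ : X => c)}.
  by move=> A T c; apply: continuous_subspaceT => u; exact: cvg_cst.
have ce : forall i j k, {within U i `&` U j `&` U k, continuous e i j k}.
  move=> i j k.
  have [[[_ _ _ _ c1P] _] _ _ _ _] := hch i.
  have [_ _ _ _ [[_ _ cEj _] _]] := hch j.
  have [_ _ [[_ _ _ c0Fk _] _] _ _] := hch k.
  have ca : {within U i `&` U j `&` U k, continuous (phi0 k \o (fun u => (u, one0 G)))}.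
    by refine (@wcomp X _ (Ob P) _ [set q | U k q.1] _ (phi0 k) _ (cin _) c0Fk) => u [_ Uk].
  have cb : {within U i `&` U j `&` U k, continuous (eps j \o (phi0 k \o (fun u => (u, one0 G))))}.
    by refine (@wcomp X _ _ _ [set p | U j (pi0 p)] _ (eps j) _ ca cEj) => u [[_ Uj] Uk] /=; rewrite K2.
  have cc : {within U i `&` U j `&` U k, continuous (psi1 i \o (eps j \o (phi0 k \o (fun u => (u, one0 G)))))}.
    refine (@wcomp X _ _ _ (full_mor [set p | U i (pi0 p)]) _ (psi1 i) _ cb c1P) => u [[Ui Uj] Uk] /=.
    apply: full; have Ujp : U j (pi0 (phi0 k (u, one0 G))) by rewrite K2.
    by have [_ _ ->] := K4 j _ Ujp; rewrite K2.
  have cd := wglob (@csnd _ _) cc.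
  have sub1 : U i `&` U j `&` U k `<=` U i `&` U j by move=> u [[? ?] ?].
  have sub2 : U i `&` U j `&` U k `<=` U j `&` U k by move=> u [[? ?] ?].
  have cxij := continuous_subspaceW sub1 (cx i j).
  have cxjk := continuous_subspaceW sub2 (cx j k).
  have cm := wglob cmul0 (wpair (wglob cmul0 (wpair cxij cxjk)) (ccst _ _ (one0 G))).
  have call := wglob cmul1 (wpair cd (wglob cinv1 (wglob cgid cm))).
  apply: (subspace_eq_continuous _ call) => u /set_mem hu.
  by rewrite /from_subspace /comp /= he //= /idm mK1.
split.
- exact: cx.
- exact: ce.
- move=> i j k u hu; exact: (proj1 (Kst i j k u hu)).
- move=> i j k u hu; exact: (proj2 (Kst i j k u hu)).
- move=> i j k l u hu; rewrite /conj2 /idm; exact: Kcoc.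
Qed.
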